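(* Let $\mu$ be a finite positive measure on $(\Omega,\mathcal B)$ with atoms $A_1,A_2,\dots$ arranged so that $\mu(A_i)\ge\mu(A_{i+1})$. Let $X=\operatorname{sp}\{1_A-1_B:A,B\in\mathcal B,\ \mu(A)=\mu(B)\}$ and let $X_1$ be the norm closure of $X$ in $L_1(\mu)$. Suppose there is a constant $K$ such that for all $i,m\in\mathbb N$ there exists $h\in X_1$ with $\operatorname{supp}(h-1_{A_i})\subset\Omega\setminus\bigcup_{j\le m}A_j$ and $\|h\|_1\le K\mu(A_i)$. If $F\in L_\infty(\mu)$ satisfies $\int hF\,d\mu=0$ for all $h\in X_1$, and $\lim_{n\to\infty}F(A_n)$ exists, then $F$ is ($\mu$-a.e.) constant.
   Context: An atom of $\mu$ is a set $A$ with $\mu(A)>0$ such that each measurable subset of $A$ has measure $0$ or $\mu(A)$. For a measurable function $F$ and an atom $A$, $F(A)$ denotes the ($\mu$-a.e.) constant value of $F$ on $A$. $\operatorname{sp}$ denotes linear span. *)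

(* Defs.v *)
From HB Require Import structures.
From mathcomp Require Import all_boot all_order all_algebra.
From mathcomp Require Import all_classical all_reals all_analysis.

Set Implicit Arguments.
Unset Strict Implicit.
Unset Printing Implicit Defensive.

Import Order.TTheory GRing.Theory Num.Theory.
Local Open Scope classical_set_scope.
Local Open Scope ring_scope.

Definition is_atom d (T : measurableType d) (R : realType)
  (mu : set T -> \bar R) (A : set T) : Prop :=
  measurable A /\ (0 < mu A)%E /\
  forall B, measurable B -> B `<=` A -> mu B = 0%E \/ mu B = mu A.

Definition eqmeas_span d (T : measurableType d) (R : realType)
  (mu : set T -> \bar R) : set (T -> R) :=
  [set g | exists (n : nat) (c : nat -> R) (A B : nat -> set T),
     (forall k, (k < n)%N ->
        [/\ measurable (A k), measurable (B k) & mu (A k) = mu (B k)]) /\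
     g = fun x => \sum_(k < n) c k * (\1_(A k) x - \1_(B k) x)].

Definition eqmeas_closure d (T : measurableType d) (R : realType)
  (mu : {measure set T -> \bar R}) : set (T -> R) :=
  [set h | mu.-integrable setT (EFin \o h) /\
     forall e : R, 0 < e ->
       exists2 g, eqmeas_span mu g &
         (\int[mu]_x (`|h x - g x|)%:E < e%:E)%E].

(* Main.v *)
Require Import Defs.
From HB Require Import structures.
From mathcomp Require Import all_boot all_order all_algebra.
From mathcomp Require Import all_classical all_reals all_analysis.
From mathcomp Require Import lra.
From mathcomp Require Import measurable_realfun.

Set Implicit Arguments.
Unset Strict Implicit.
Unset Printing Implicit Defensive.
Import Order.TTheory GRing.Theory Num.Theory.
Import numFieldNormedType.Exports.
Local Open Scope classical_set_scope.
Local Open Scope ring_scope.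
Section sierp.
Context d (T : measurableType d) (R : realType)
  (mu : {finite_measure set T -> \bar R}).
Definition mr (X : set T) : R := fine (mu X).
Local Notation m := mr.

Lemma muE X : measurable X -> mu X = (m X)%:E.
Proof. by move=> mX; rewrite /m fineK // fin_num_measure. Qed.

Lemma m_ge0 X : 0 <= m X.
Proof. by rewrite /m fine_ge0. Qed.

Lemma m0 : m set0 = 0.
Proof. by rewrite /m measure0. Qed.

Lemma m_le X Y : measurable X -> measurable Y -> X `<=` Y -> m X <= m Y.
Proof.
move=> mX mY XY; rewrite -lee_fin -!muE //.
by apply: le_measure; rewrite ?inE.
Qed.

Lemma mU X Y : measurable X -> measurable Y -> X `&` Y = set0 ->
  m (X `|` Y) = m X + m Y.
Proof.
move=> mX mY XY.
by rewrite /mr measureU // fineD // fin_num_measure.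
Qed.

Lemma mD X Y : measurable X -> measurable Y -> Y `<=` X ->
  m (X `\` Y) = m X - m Y.
Proof.
move=> mX mY YX.
have := mU mY (measurableD mX mY) _.
rewrite setDUK // => ->; first by rewrite addrAC subrr add0r.
by apply/seteqP; split => // x [? []].
Qed.

Lemma mU2 X Y : measurable X -> measurable Y -> m (X `|` Y) <= m X + m Y.
Proof.
move=> mX mY; rewrite -lee_fin EFinD -!muE //; last exact: measurableU.
exact: measureU2.
Qed.

Variable N : set T.
Hypothesis NA : forall P, measurable P -> P `<=` N -> 0 < m P ->
  exists Q, [/\ measurable Q, Q `<=` P, 0 < m Q & m Q < m P].

Lemma small_half P : measurable P -> P `<=` N -> 0 < m P -> forall k,
  exists Q, [/\ measurable Q, Q `<=` P, 0 < m Q & m Q * 2 ^+ k <= m P].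
Proof.
move=> mP PN P0; elim=> [|k [Q [mQ QP Q0 Qk]]].
  by exists P; split => //; rewrite expr0 mulr1.
have [Q' [mQ' Q'Q Q'0 Q'lt]] := NA mQ (subset_trans QP PN) Q0.
have k0 : 0 < 2 ^+ k :> R by rewrite exprn_gt0.
have [h|h] := leP (m Q' * 2) (m Q).
- exists Q'; split => //; first exact: subset_trans Q'Q QP.
  apply: le_trans Qk; rewrite exprS mulrA ler_pM2r //.
- exists (Q `\` Q'); split.
  + exact: measurableD.
  + by move=> x [/QP].
  + by rewrite mD // subr_gt0.
  + apply: le_trans Qk; rewrite exprS mulrA ler_pM2r // mD //; lra.
Qed.

Lemma small P : measurable P -> P `<=` N -> 0 < m P -> forall e, 0 < e ->
  exists Q, [/\ measurable Q, Q `<=` P, 0 < m Q & m Q < e].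
Proof.
move=> mP PN P0 e e0.
pose k := Num.truncn (m P / e).
have [Q [mQ QP Q0 Qk]] := small_half mP PN P0 k.+1.
exists Q; split => //.
have h1 : m P / e < k.+1%:R := truncnS_gt _.
have h2 : (k.+1)%:R <= 2 ^+ k.+1 :> R.
  by rewrite -natrX ler_nat ltnW // ltn_expl.
have h3 : m P < e * 2 ^+ k.+1.
  rewrite ltr_pdivrMr // in h1.
  by apply: (lt_le_trans h1); rewrite mulrC ler_pM2l.
have k0 : 0 < 2 ^+ k.+1 :> R by rewrite exprn_gt0.
by rewrite -(ltr_pM2r k0); exact: le_lt_trans Qk h3.
Qed.


Lemma sierp P t : measurable P -> P `<=` N -> 0 <= t -> t <= m P ->
  exists S, [/\ measurable S, S `<=` P & m S = t].
Proof.
move=> mP PN t0 tP.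
pose cand S Q := [/\ measurable Q, Q `<=` P `\` S & m S + m Q <= t].
pose good S := [/\ measurable S, S `<=` P & m S <= t].
have step : forall S, exists Q, good S ->
    cand S Q /\ (forall Q', cand S Q' -> m Q' <= 2 * m Q).
  move=> S; have [gS|ngS] := pselect (good S); last by exists set0.
  case: gS => mS SP St.
  pose E := [set r | exists Q, cand S Q /\ r = m Q].
  have c0 : cand S set0 by split => //; rewrite m0 addr0.
  have E0 : E 0 by exists set0; rewrite m0.
  have Eub : ubound E t.
    move=> r [Q [[_ _ h] ->]]; have := m_ge0 S; lra.
  have hs : has_sup E by split; [exists 0 | exists t].
  have s0 : 0 <= sup E := sup_upper_bound hs E0.
  have [s_0|s_n0] := eqVneq (sup E) 0.
    exists set0 => _; split => // Q' cQ'.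
    have : E (m Q') by exists Q'.
    move/(sup_upper_bound hs); rewrite s_0 m0; lra.
  have sp : 0 < sup E by rewrite lt_def s_n0.
  have [r [Q [cQ ->]] hr] := sup_adherent (divr_gt0 sp (ltr0Sn _ 1)) hs.
  exists Q => _; split => // Q' cQ'.
  have : E (m Q') by exists Q'.
  move/(sup_upper_bound hs); lra.
have [f hf] := choice step.
pose S := fix S k := if k is k'.+1 then S k' `|` f (S k') else set0.
have gS : forall k, good (S k).
  elim => [|k [mS SP St]] /=; first by split => //; rewrite m0.
  have [[mQ QPS Qt] _] := hf _ (And3 mS SP St).
  have dj : S k `&` f (S k) = set0.
    by apply/seteqP; split => // x [xS /QPS [_]].
  split; first exact: measurableU.
    by move=> x [/SP //|/QPS []].
  by rewrite mU.
have mS k : measurable (S k) by case: (gS k).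
have Sinc k : m (S k.+1) = m (S k) + m (f (S k)).
  have [[mQ QPS Qt] _] := hf _ (gS k).
  rewrite /= mU //.
  by apply/seteqP; split => // x [xS /QPS [_]].
pose U := \bigcup_k S k.
have mUm : measurable U by exact: bigcup_measurable.
have UP : U `<=` P by move=> x [k _]; case: (gS k) => _ + _; apply.
have SU k : S k `<=` U by move=> x Sx; exists k.
have ndS : nondecreasing_seq S.
  by apply/nondecreasing_seqP => n /=; rewrite subsetEset; exact: subsetUl.
have Ut : m U <= t.
  have cv := @nondecreasing_cvg_mu _ _ _ mu _ mS mUm ndS.
  rewrite -lee_fin -muE // -(cvg_lim _ cv) //.
  apply: lime_le; first by apply/cvg_ex; eexists; exact: cv.
  by apply: nearW => n /=; rewrite muE // lee_fin; case: (gS n).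
have [Ut'|Ult] := eqVneq (m U) t; first by exists U.
have Ult' : m U < t by rewrite lt_def eq_sym Ult Ut.
have mPU : measurable (P `\` U) by exact: measurableD.
have PU0 : 0 < m (P `\` U) by rewrite mD // subr_gt0; lra.
have tU0 : 0 < t - m U by rewrite subr_gt0.
have [Rs [mR RPU R0 Rlt]] := small mPU (subset_trans (@subDsetl _ _ _) PN) PU0 tU0.
have bigQ k : m Rs <= 2 * m (f (S k)).
  apply: (proj2 (hf _ (gS k))); split => //.
    by move=> x /RPU [xP xU]; split => // /(SU k).
  have := m_le (mS k) mUm (SU k); lra.
have lin n : n%:R * (m Rs / 2) <= m (S n).
  elim: n => [|n IH]; first by rewrite mul0r /= m0.
  rewrite Sinc -natr1 mulrDl mul1r; have := bigQ n; lra.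
pose n := (Num.truncn (t / (m Rs / 2))).+1.
have hn : t / (m Rs / 2) < n%:R := truncnS_gt _.
have r0 : 0 < m Rs / 2 by rewrite divr_gt0.
rewrite ltr_pdivrMr // in hn.
have := lin n; case: (gS n) => _ _ h; lra.
Qed.
End sierp.
Section gen.
Context d (T : measurableType d) (R : realType)
  (mu : {finite_measure set T -> \bar R}).

Lemma ae_le_integrable D (f g : T -> R) : measurable D -> measurable_fun D f ->
  mu.-integrable D (EFin \o g) -> {ae mu, forall x, D x -> `|f x| <= g x} ->
  mu.-integrable D (EFin \o f).
Proof.
move=> mD mf ig fg; apply/integrableP; split; first exact/measurable_EFinP.
case/integrableP: ig => mg gfin.
apply: le_lt_trans gfin.
apply: ae_ge0_le_integral => //.
- by apply: measurableT_comp => //; exact/measurable_EFinP.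
- by apply: measurableT_comp.
- by apply: filterS fg => x h Dx /=; rewrite lee_fin (le_trans (h Dx)) // ler_norm.
Qed.

Lemma ae_null (S : set T) (Q : T -> Prop) : measurable S -> mu S = 0%E ->
  (forall x, ~ S x -> Q x) -> {ae mu, forall x, Q x}.
Proof.
move=> mS S0 h; exists S; split => // x /= nQx.
by apply: contrapT => nSx; exact: nQx (h x nSx).
Qed.

End gen.
Lemma int_indicM d (T : measurableType d) (R : realType)
  (mu : {measure set T -> \bar R}) (A0 : set T) (f : T -> R) :
  (\int[mu]_x (\1_A0 x * f x)%:E = \int[mu]_(x in A0) (f x)%:E)%E.
Proof.
rewrite [RHS]integral_mkcond; apply: eq_integral => x _.
by rewrite patchE indicE; case: (x \in A0); rewrite ?mul1r ?mul0r.
Qed.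

Lemma bounded_indicT T {R : realType} (A : set T) :
  [bounded \1_A x : R^o | x in setT].
Proof.
exists 1; split => // r r1 t _ /=; rewrite indicE.
by case: (t \in A); rewrite /= ?normr1 ?normr0 ltW // (lt_trans _ r1).
Qed.

Section main.
Context d (T : measurableType d) (R : realType)
  (mu : {finite_measure set T -> \bar R}) (A : nat -> set T).
Hypothesis hatom : forall i, is_atom mu (A i).
Hypothesis hdisj : forall i j, i <> j -> A i `&` A j = set0.
Hypothesis hall : forall B, is_atom mu B -> exists i, mu (B `\` A i) = 0%E.
Hypothesis hdec : forall i, (mu (A i.+1) <= mu (A i))%E.
Variable K : R.
Hypothesis hK : forall i m : nat, exists2 h, eqmeas_closure mu h &
     {ae mu, forall x, (\bigcup_(j in [set j | (j <= m)%N]) A j) x ->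
                       h x = \1_(A i) x} /\
     (\int[mu]_x (`|h x|)%:E <= K%:E * mu (A i))%E.
Variable F : T -> R.
Hypothesis mF : measurable_fun setT F.
Variable M : R.
Hypothesis FM : {ae mu, forall x, `|F x| <= M}.
Hypothesis Forth : forall h, eqmeas_closure mu h ->
  (\int[mu]_x (h x * F x)%:E)%E = 0%E.
Variable c : nat -> R.
Hypothesis hc : forall n, {ae mu, forall x, A n x -> F x = c n}.
Hypothesis cc : cvgn c.
Local Notation m := (mr mu).
Let cl := limn c.

Lemma mA i : measurable (A i). Proof. by case: (hatom i). Qed.

Lemma mApos i : 0 < m (A i).
Proof. by case: (hatom i) => mAi [h _]; rewrite -lte_fin -muE. Qed.

Lemma intF D : measurable D -> mu.-integrable D (EFin \o F).
Proof.
move=> mD; apply: (@ae_le_integrable _ _ _ mu D F (cst M)) => //.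
- exact: measurable_funS mF.
- exact: finite_measure_integrable_cst.
- by apply: filterS FM => x h _.
Qed.

Lemma intIF A0 : measurable A0 ->
  mu.-integrable setT (EFin \o (fun x => \1_A0 x * F x)).
Proof.
move=> mA0.
apply: (@eq_integrable _ _ _ mu setT measurableT ((EFin \o \1_A0) \* (EFin \o F))%E) => //.
apply: integrableMr => //; [exact: bounded_indicT | exact: intF].
Qed.

Lemma eqint A0 B0 : measurable A0 -> measurable B0 -> mu A0 = mu B0 ->
  (\int[mu]_(x in A0) (F x)%:E = \int[mu]_(x in B0) (F x)%:E)%E.
Proof.
move=> mA0 mB0 e.
pose g := fun x => \sum_(k < 1) (fun _ => 1 : R) k *
   (\1_((fun _ => A0) k) x - \1_((fun _ => B0) k) x).
have gE : g = fun x => \1_A0 x - \1_B0 x.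
  by apply/funext => x; rewrite /g big_ord1 mul1r.
have ig : mu.-integrable setT (EFin \o g).
  rewrite gE; apply: (eq_integrable _ (fun x => (\1_A0 x)%:E - (\1_B0 x)%:E)%E) => //.
  by apply: integrableB => //; exact: integrable_indic.
have cg : eqmeas_closure mu g.
  split => // e0 he0; exists g.
    by exists 1%N, (fun _ => 1), (fun _ => A0), (fun _ => B0); split.
  under eq_integral do rewrite subrr normr0.
  by rewrite integral0 lte_fin.
have := Forth cg.
rewrite gE.
under eq_integral do rewrite mulrBl EFinB.
rewrite integralB_EFin //; [|exact: intIF..].
rewrite !int_indicM.
have fa := integrable_fin_num mA0 (intF mA0).
have fb := integrable_fin_num mB0 (intF mB0).
rewrite -(fineK fa) -(fineK fb) -EFinB => -[] /eqP; rewrite subr_eq0 => /eqP ->.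
done.
Qed.

Lemma span_int0 g : eqmeas_span mu g ->
  mu.-integrable setT (EFin \o g) /\ (\int[mu]_x (g x)%:E = 0)%E.
Proof.
case=> n [a [B1 [B2 [hB ->]]]].
pose t (k : 'I_n) := fun x => (a k * (\1_(B1 k) x - \1_(B2 k) x))%:E.
have it : forall k, mu.-integrable setT (t k).
  move=> k; have [mB1 mB2 _] := hB k (ltn_ord k).
  apply: (@eq_integrable _ _ _ mu setT measurableT
    (fun x => (a k)%:E * ((\1_(B1 k) x)%:E - (\1_(B2 k) x)%:E))%E).
    by move=> x _; rewrite /t EFinM EFinB.
  apply: integrableZl => //; apply: integrableB => //; exact: integrable_indic.
have gE : (EFin \o (fun x => \sum_(k < n) a k * (\1_(B1 k) x - \1_(B2 k) x)))
   = (fun x => \sum_(k < n) t k x)%E.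
  by apply/funext => x /=; rewrite sumEFin.
split; first by rewrite gE; exact: integrable_sum.
under eq_integral do rewrite -sumEFin.
rewrite (@integral_sum _ _ _ mu setT measurableT _ t it); apply: big1 => k _.
have [mB1 mB2 e] := hB k (ltn_ord k).
rewrite /t; under eq_integral do rewrite EFinM.
rewrite integralZl //; last first.
  apply: (@eq_integrable _ _ _ mu setT measurableT
    (fun x => ((\1_(B1 k) x)%:E - (\1_(B2 k) x)%:E))%E) => //.
  by apply: integrableB => //; exact: integrable_indic.
rewrite integralB_EFin //; try exact: integrable_indic.
rewrite !integral_indic // !setIT.
transitivity ((a k)%:E * (mu (B2 k) - mu (B2 k)))%E.
  by congr (_ * (_ - _))%E; exact: e.
by rewrite subee ?mule0 // fin_num_measure.
Qed.

Lemma closure_int0 h : eqmeas_closure mu h -> (\int[mu]_x (h x)%:E = 0)%E.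
Proof.
case=> ih hc'.
have fh := integrable_fin_num measurableT ih.
suff key : forall e, 0 < e -> `|fine (\int[mu]_x (h x)%:E)| < e.
  rewrite -(fineK fh); congr EFin.
  apply/eqP; apply: contraT => hn.
  have hp : 0 < `|fine (\int[mu]_x (h x)%:E)| by rewrite normr_gt0.
  by have := key _ hp; rewrite ltxx.
move=> e e0; have [g sg hg] := hc' e e0.
have [ig ig0] := span_int0 sg.
have ihg : mu.-integrable setT (EFin \o (fun x => h x - g x)).
  apply: (@eq_integrable _ _ _ mu setT measurableT
    (fun x => (h x)%:E - (g x)%:E)%E) => //.
  exact: integrableB.
have m1 := measurable_int _ ihg.
have := le_abse_integral mu measurableT m1.
rewrite /comp.
under eq_integral do rewrite EFinB.
rewrite integralB_EFin // ig0 sube0 -(fineK fh) => h1.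
rewrite -lte_fin; apply: le_lt_trans h1 _.
exact: hg.
Qed.

Definition Nset := ~` \bigcup_j A j.

Lemma mN : measurable Nset.
Proof. by apply: measurableC; apply: bigcup_measurable => k _; exact: mA. Qed.

Lemma NA P : measurable P -> P `<=` Nset -> 0 < m P ->
  exists Q, [/\ measurable Q, Q `<=` P, 0 < m Q & m Q < m P].
Proof.
move=> mP PN P0; apply: contrapT => hno.
have hat : is_atom mu P.
  split => //; split; first by rewrite muE // lte_fin.
  move=> B mB BP.
  have h1 := m_le mu mB mP BP; have h2 := m_ge0 mu B.
  have [B0|Bn0] := eqVneq (m B) 0; first by left; rewrite muE // B0.
  have [BP'|BPn] := eqVneq (m B) (m P); first by right; rewrite !muE // BP'.
  exfalso; apply: hno; exists B; split => //.
    by rewrite lt_def Bn0 h2.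
  by rewrite lt_def eq_sym BPn h1.
have [i hi] := hall hat.
have e : P `\` A i = P.
  apply/seteqP; split => [x []//| x Px]; split => // Ai.
  by apply: (PN x Px); exists i.
move: hi; rewrite e muE // => -[] h0.
by move: P0; rewrite h0 ltxx.
Qed.

Lemma Amono n k : (n <= k)%N -> m (A k) <= m (A n).
Proof.
elim: k => [|k IH]; first by rewrite leqn0 => /eqP ->.
rewrite leq_eqVlt => /orP[/eqP -> //|]; rewrite ltnS => /IH.
apply: le_trans.
by have := hdec k; rewrite !muE ?lee_fin //; exact: mA.
Qed.

Lemma Asmall r : 0 < r -> exists n0, forall n, (n0 <= n)%N -> m (A n) <= r.
Proof.
move=> r0; apply: contrapT => hno.
have big : forall n, r < m (A n).
  move=> n; rewrite ltNge; apply/negP => hn; apply: hno; exists n => k nk.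
  exact: le_trans (Amono nk) hn.
pose V := fix V n := if n is n'.+1 then V n' `|` A n' else set0.
have mV n : measurable (V n).
  by elim: n => [|n IH] //=; apply: measurableU => //; exact: mA.
have VA n x : V n x -> exists2 k, (k < n)%N & A k x.
  elim: n => [//|n IH] /= [/IH [k kn Ak]|An]; last by exists n.
  by exists k => //; exact: ltnW.
have Vm n : n%:R * r <= m (V n).
  elim: n => [|n IH]; first by rewrite mul0r /= m0.
  rewrite /= mU //; last 2 first.
  - exact: mA.
  - apply/seteqP; split => // x [/VA [k kn Ak] An].
    have kn' : k <> n by move=> kn0; move: kn; rewrite kn0 ltnn.
    by have := hdisj kn'; move=> /seteqP [+ _] => /(_ x (conj Ak An)).
  rewrite -natr1 mulrDl mul1r; have := big n; lra.
pose n := (Num.truncn (m setT / r)).+1.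
have hn : m setT / r < n%:R := truncnS_gt _.
rewrite ltr_pdivrMr // in hn.
have := Vm n; have := m_le mu (mV n) measurableT (@subsetT _ _); lra.
Qed.

Lemma intA n : (\int[mu]_(x in A n) (F x)%:E = (c n * m (A n))%:E)%E.
Proof.
have mAn := mA n.
rewrite (ae_eq_integral (cst (c n)%:E)) //.
- by rewrite integral_cst // EFinM -muE.
- by apply/measurable_EFinP; exact: measurable_funS mF.
- by apply: filterS (hc n) => x h /h ->.
Qed.

Lemma N_key P (s del : R) : measurable P -> P `<=` Nset ->
  (s = 1 \/ s = -1) -> 0 < del ->
  (forall x, P x -> s * cl + del <= s * F x) -> m P = 0.
Proof.
move=> mP PN hs d0 hP.
apply/eqP; apply: contraT => hP0.
have P0 : 0 < m P by rewrite lt_def hP0 m_ge0.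
have [n0 hn0] := Asmall P0.
have [n1 _ hn1] := cvgr_dist_lt _ _ cc _ d0.
pose n := maxn n0 n1.
have [S [mS SP e]] := sierp NA mP PN (m_ge0 mu (A n)) (hn0 n (leq_maxl _ _)).
have eS : mu S = mu (A n) by rewrite !muE ?e //; exact: mA.
have hint := eqint mS (mA n) eS.
have lb : (((s * cl + del) * m S)%:E <= s%:E * \int[mu]_(x in S) (F x)%:E)%E.
  rewrite -integralZl //; last exact: intF.
  rewrite EFinM -muE // -integral_cst //.
  apply: le_integral => //.
  - exact: finite_measure_integrable_cst.
  - by apply: integrableZl => //; exact: intF.
  - by move=> x /set_mem Sx /=; rewrite -EFinM lee_fin; apply: hP; exact: SP.
rewrite hint intA -EFinM lee_fin e in lb.
have := mApos n; have := hn1 n (leq_maxr _ _); rewrite /= ltr_norml => /andP[h1 h2].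
rewrite /cl in lb; case: hs => sE; rewrite sE in lb; nra.
Qed.

Lemma mge a : measurable [set x | a <= F x].
Proof.
have -> : [set x | a <= F x] = setT `&` F @^-1` `[a, +oo[.
  by apply/seteqP; split => x /=; rewrite in_itv /= ?andbT; [move=> h; split | case].
exact: mF (measurable_itv _).
Qed.

Lemma mle a : measurable [set x | F x <= a].
Proof.
have -> : [set x | F x <= a] = setT `&` F @^-1` `]-oo, a].
  by apply/seteqP; split => x /=; rewrite in_itv /= ?andbT; [move=> h; split | case].
exact: mF (measurable_itv _).
Qed.

Lemma Nae_k (del : R) : 0 < del ->
  {ae mu, forall x, Nset x -> `|F x - cl| < del}.
Proof.
move=> d0.
pose P1 := Nset `&` [set x | cl + del <= F x].
pose P2 := Nset `&` [set x | F x <= cl - del].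
have mP1 : measurable P1 by apply: measurableI; [exact: mN | exact: mge].
have mP2 : measurable P2 by apply: measurableI; [exact: mN | exact: mle].
have h1 : m P1 = 0.
  apply: (@N_key _ 1 del mP1 (@subIsetl _ _ _) (or_introl erefl) d0).
  by move=> x [_ /= h]; rewrite !mul1r.
have h2 : m P2 = 0.
  apply: (@N_key _ (-1) del mP2 (@subIsetl _ _ _) (or_intror erefl) d0).
  by move=> x [_ /= h]; rewrite !mulN1r; lra.
apply: (@ae_null _ _ _ mu (P1 `|` P2)).
- exact: measurableU.
- rewrite muE; last exact: measurableU.
  have := mU2 mu mP1 mP2; have := m_ge0 mu (P1 `|` P2); rewrite h1 h2 => ha hb.
  by congr EFin; lra.
- move=> x nP Nx; rewrite ltr_norml; apply/andP; split.
    rewrite ltrBrDl; rewrite ltNge; apply/negP => hx.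
    by apply: nP; right; split => //=; lra.
  rewrite ltrBlDl ltNge; apply/negP => hx.
  by apply: nP; left; split => //=; lra.
Qed.

Lemma Nae : {ae mu, forall x, Nset x -> F x = cl}.
Proof.
have hk : forall k : nat,
    {ae mu, forall x, Nset x -> `|F x - cl| < (k.+1%:R)^-1}.
  by move=> k; apply: Nae_k; rewrite invr_gt0.
have := ae_foralln hk.
apply: filterS => x hx Nx.
apply/eqP; rewrite -subr_eq0 -normr_le0.
apply: contraT; rewrite -ltNge => hp.
pose k := Num.truncn ((`|F x - cl|)^-1).
have h2 := hx k Nx.
have h1 : `|F x - cl|^-1 < k.+1%:R := truncnS_gt _.
have kp : (0 : R) < k.+1%:R by rewrite ltr0n.
rewrite -(ltr_pM2r hp) mulVf ?gt_eqF // in h1.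
rewrite -(ltr_pM2l kp) mulfV ?gt_eqF // in h2.
lra.
Qed.

Lemma atom_key i e : 0 < e ->
  `|c i - cl| * m (A i) <= e * K * m (A i).
Proof.
move=> e0.
have [n1 _ hn1] := cvgr_dist_lt _ _ cc _ e0.
pose mm := maxn n1 i.
have [h hcl [hae hn]] := hK i mm.
have ih : mu.-integrable setT (EFin \o h) by case: hcl.
have hint0 := closure_int0 hcl.
have hF0 := Forth hcl.
have mh : measurable_fun setT h.
  by have /measurable_EFinP := measurable_int _ ih.
have ihF : mu.-integrable setT (EFin \o (fun x => h x * F x)).
  apply: (@ae_le_integrable _ _ _ mu setT _ (fun x => M * `|h x|)) => //.
  - exact: measurable_funM.
  - apply: (@eq_integrable _ _ _ mu setT measurableT
      (fun x => M%:E * (`|h x|)%:E)%E) => //.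
    by apply: integrableZl => //; exact: integrable_norm.
  - apply: filterS FM => x hx _.
    by rewrite normrM [X in _ <= X]mulrC ler_wpM2l.
have ir1 : mu.-integrable setT (EFin \o (fun x => h x * (F x - cl))).
  apply: (@eq_integrable _ _ _ mu setT measurableT
      (fun x => (h x * F x)%:E - (cl%:E * (h x)%:E))%E).
    by move=> x _ /=; rewrite mulrBr EFinB EFinM mulrC.
  by apply: integrableB => //; exact: integrableZl.
have ir2 : mu.-integrable setT (EFin \o (fun x => \1_(A i) x * (c i - cl))).
  apply: (@eq_integrable _ _ _ mu setT measurableT
      (fun x => ((c i - cl)%:E * (\1_(A i) x)%:E))%E).
    by move=> x _ /=; rewrite mulrC EFinM.
  by apply: integrableZl => //; apply: integrable_indic; exact: mA.
pose r := fun x => h x * (F x - cl) - \1_(A i) x * (c i - cl).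
have ir : mu.-integrable setT (EFin \o r).
  apply: (@eq_integrable _ _ _ mu setT measurableT
      (fun x => (h x * (F x - cl))%:E - (\1_(A i) x * (c i - cl))%:E)%E).
    by move=> x _ /=; rewrite /r EFinB.
  exact: integrableB.
have intr : (\int[mu]_x (r x)%:E = (- ((c i - cl) * m (A i)))%:E)%E.
  rewrite /r; under eq_integral do rewrite EFinB.
  rewrite integralB_EFin //.
  under eq_integral do rewrite mulrBr EFinB.
  rewrite integralB_EFin //; last first.
    apply: (@eq_integrable _ _ _ mu setT measurableT
      (fun x => (cl%:E * (h x)%:E))%E).
      by move=> x _ /=; rewrite mulrC EFinM.
    exact: integrableZl.
  rewrite hF0.
  under eq_integral do rewrite mulrC EFinM.
  rewrite integralZl // hint0 mule0 sube0.
  under eq_integral do rewrite mulrC EFinM.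
  rewrite integralZl //; last by apply: integrable_indic; exact: mA.
  rewrite integral_indic ?setIT; last exact: mA.
  rewrite sub0e EFinN EFinM; congr (- (_ * _))%E.
  exact: (@muE _ _ _ mu _ (mA i)).
  exact: measurableT.
have aer : {ae mu, forall x, `|r x| <= e * `|h x|}.
  have hcA := ae_foralln hc.
  apply: filterS (filterI hae (filterI hcA Nae)) => x [h1 [h2 h3]].
  have Aix : forall j : nat, A j x -> j <> i -> \1_(A i) x = 0 :> R.
    move=> j Aj ji; rewrite indicE memNset //= => Ai.
    by have := hdisj ji; move=> /seteqP [+ _] => /(_ x (conj Aj Ai)).
  rewrite /r.
  have [[j Aj]|nA] := pselect (exists j, A j x).
    have Fx := h2 j Aj.
    have [jm|jm] := leqP j mm.
      have hx : h x = \1_(A i) x by apply: h1; exists j.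
      have [ji|ji] := eqVneq j i.
        rewrite hx indicE mem_set -?ji // Fx ji mul1r subrr normr0.
        by rewrite mulr_ge0 // ltW.
      rewrite hx (Aix j Aj (elimN eqP ji)) !mul0r subrr normr0.
      by rewrite mulr_ge0 // ltW.
    have ji : j <> i.
      by move=> ji; move: jm; rewrite ji /mm ltnNge leq_maxr.
    rewrite (Aix j Aj ji) mul0r subr0 Fx normrM [X in _ <= X]mulrC ler_wpM2l //.
    have := hn1 j (ltnW (leq_ltn_trans (leq_maxl _ _) jm)).
    by rewrite distrC => /ltW.
  have Nx : Nset x by move=> [j _ Aj]; apply: nA; exists j.
  have niA : \1_(A i) x = 0 :> R.
    by rewrite indicE memNset // => Ai; apply: nA; exists i.
  by rewrite h3 // subrr mulr0 niA mul0r subr0 normr0 mulr_ge0 // ltW.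
have mr : measurable_fun setT (fun x => (r x)%:E) := measurable_int _ ir.
have b1 := le_abse_integral mu measurableT mr.
have b2 : (\int[mu]_x `|(r x)%:E| <= \int[mu]_x (e * `|h x|)%:E)%E.
  apply: ae_ge0_le_integral => //.
  - exact: measurableT_comp.
  - by move=> x _; rewrite lee_fin mulr_ge0 // ltW.
  - apply/measurable_EFinP; apply: measurable_funM => //.
    exact: measurableT_comp.
  - by apply: filterS aer => x hx _; rewrite lee_fin.
have b3 : (\int[mu]_x (e * `|h x|)%:E = e%:E * \int[mu]_x (`|h x|)%:E)%E.
  under eq_integral do rewrite EFinM.
  by rewrite integralZl //; exact: integrable_norm.
have e1 : mu (A i) = (m (A i))%:E := @muE _ _ _ mu _ (mA i).
rewrite e1 in hn.
have b4 : (e%:E * \int[mu]_x (`|h x|)%:E <= e%:E * (K%:E * (m (A i))%:E))%E.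
  by apply: lee_wpmul2l => //; rewrite lee_fin ltW.
rewrite b3 in b2.
have := le_trans b1 (le_trans b2 b4).
rewrite intr -!EFinM /= lee_fin normrN normrM (ger0_norm (m_ge0 _ _)).
by rewrite mulrA.
Qed.

Lemma atom_val i : c i = cl.
Proof.
have Ap := mApos i.
have key : forall e, 0 < e -> `|c i - cl| <= e * K.
  by move=> e e0; have := atom_key i e0; rewrite ler_pM2r.
apply/eqP; rewrite -subr_eq0 -normr_le0.
have [K0|K0] := leP K 0.
  by have := key 1 ltr01; rewrite mul1r => h; apply: le_trans h K0.
apply: contraT; rewrite -ltNge => hp.
have := key (`|c i - cl| / (2 * K)) (divr_gt0 hp (mulr_gt0 (ltr0Sn _ 1) K0)).
have -> : `|c i - cl| / (2 * K) * K = `|c i - cl| / 2.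
  by rewrite invfM mulrA -mulrA mulVf ?mulr1 // gt_eqF.
lra.
Qed.

Lemma main_res : exists k : R, {ae mu, forall x, F x = k}.
Proof.
exists cl.
apply: filterS (filterI (ae_foralln hc) Nae) => x [h1 h2].
have [[j Aj]|nA] := pselect (exists j, A j x).
  by rewrite (h1 j Aj) atom_val.
by apply: h2 => -[j _ Aj]; apply: nA; exists j.
Qed.


End main.

Theorem theorem2p2 (d : measure_display) (T : measurableType d) (R : realType)
  (mu : {finite_measure set T -> \bar R}) (A : nat -> set T)
  (hatom : forall i, is_atom mu (A i))
  (hdisj : forall i j, i <> j -> A i `&` A j = set0)
  (hall : forall B, is_atom mu B -> exists i, mu (B `\` A i) = 0%E)
  (hdec : forall i, (mu (A i.+1) <= mu (A i))%E)
  (K : R)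
  (hK : forall i m : nat, exists2 h, eqmeas_closure mu h &
     {ae mu, forall x, (\bigcup_(j in [set j | (j <= m)%N]) A j) x ->
                       h x = \1_(A i) x} /\
     (\int[mu]_x (`|h x|)%:E <= K%:E * mu (A i))%E)
  (F : T -> R) (mF : measurable_fun setT F)
  (Fbd : exists M : R, {ae mu, forall x, `|F x| <= M})
  (Forth : forall h, eqmeas_closure mu h -> (\int[mu]_x (h x * F x)%:E)%E = 0%E)
  (Flim : exists c : nat -> R,
     (forall n, {ae mu, forall x, A n x -> F x = c n}) /\ cvgn c) :
  exists k : R, {ae mu, forall x, F x = k}.
Proof.
have [M FM] := Fbd.
have [c [hc cc]] := Flim.
exact: (@main_res d T R mu A hatom hdisj hall hdec K hK F mF M FM Forth c hc cc).
Qed.
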